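(* Let $G$ be a finite group and let $N$ be a non-trivial normal subgroup of $G$ with $|N|=p^a$ for some prime $p$. Then for every pair $x_1,x_2$ of elements of $G$ there exist $n_1,n_2\in N$ such that $p$ divides the order of $\langle x_1n_1,x_2n_2\rangle$. *)

(* Defs.v *)
From mathcomp Require Import all_boot all_fingroup.

(* Main.v *)
Require Import Defs.
From mathcomp Require Import all_boot all_fingroup.
From mathcomp Require Import all_solvable.
Local Open Scope group_scope.

Theorem lemma2p3 (gT : finGroupType) (G N : {group gT}) (p a : nat) :
  prime p -> N <| G -> N :!=: 1 -> #|N| = (p ^ a)%N ->
  forall x1 x2 : gT, x1 \in G -> x2 \in G ->
  exists n1 n2 : gT, [/\ n1 \in N, n2 \in N &
    p %| #|<<[set x1 * n1; x2 * n2]>>| ].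
Proof.
move=> pr nNG ntN oN x1 x2 Gx1 Gx2.
pose f (u : gT * gT) : {group gT} := generated_group ([set x1 * u.1; x2 * u.2] : {set gT}).
pose D := setX N N.
case: (boolP [exists u in D, p %| #|f u|]).
  case/exists_inP => -[n1 n2]; rewrite inE /= => /andP[Nn1 Nn2] pd.
  by exists n1, n2.
rewrite negb_exists_in => /forall_inP ndiv.
exfalso.
have D11 : (1, 1) \in D by rewrite inE /= !group1.
have fG u : u \in D -> f u \subset G.
  case: u => n1 n2; rewrite inE /= => /andP[Nn1 Nn2].
  have sNG := normal_sub nNG.
  rewrite gen_subG; apply/subsetP => z; rewrite !inE => /orP[]/eqP->;
  by rewrite groupM // (subsetP sNG).
have sub u v : u \in D -> v \in D -> f u \subset N <*> f v.
  case: u => n1 n2; case: v => m1 m2; rewrite !inE /= => /andP[Nn1 Nn2] /andP[Nm1 Nm2].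
  rewrite gen_subG; apply/subsetP => z; rewrite !inE => /orP[]/eqP->.
    have -> : x1 * n1 = (x1 * m1) * (m1^-1 * n1) by rewrite mulgA mulgK.
    rewrite groupM //.
      by rewrite (subsetP (joing_subr _ _)) // mem_gen // !inE eqxx.
    by rewrite (subsetP (joing_subl _ _)) // groupM ?groupV.
  have -> : x2 * n2 = (x2 * m2) * (m2^-1 * n2) by rewrite mulgA mulgK.
  rewrite groupM //.
    by rewrite (subsetP (joing_subr _ _)) // mem_gen // !inE eqxx orbT.
  by rewrite (subsetP (joing_subl _ _)) // groupM ?groupV.
have eqJ u v : u \in D -> v \in D -> N <*> f u = N <*> f v.
  move=> Du Dv; apply/eqP; rewrite eqEsubset.
  by rewrite (join_subG N (f u)) (join_subG N (f v)) !joing_subl sub // sub.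
have copr u : u \in D -> coprime #|N| #|f u|.
  move=> Du; rewrite oN coprimeXl // prime_coprime //; exact: ndiv.
have TI u : u \in D -> N :&: f u = 1.
  by move=> Du; apply: coprime_TIg; apply: copr.
have cardJ u : u \in D -> #|N <*> f u| = (#|N| * #|f u|)%N.
  move=> Du; rewrite norm_joinEr ?TI_cardMg ?TI //.
  exact: subset_trans (fG u Du) (normal_norm nNG).
have cardf u : u \in D -> #|f u| = #|f (1, 1)|.
  move=> Du; apply/eqP; rewrite -(eqn_pmul2l (cardG_gt0 N)) -!cardJ //.
  by rewrite (eqJ u (1,1)).
have solN : solvable N.
  apply: (@pgroup_sol _ p); rewrite /pgroup oN pnatX pnat_id // orbT.
have inim u : u \in D -> f u \in [set (f (1%g, 1%g) :^ y)%G | y in N].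
  move=> Du.
  have n11 : f (1, 1) \subset 'N(N) by exact: subset_trans (fG _ D11) (normal_norm nNG).
  have s1 : f u \subset N * f (1, 1) by rewrite -norm_joinEr //; exact: sub.
  have [y Ny eqy] := SchurZassenhaus_trans_sol solN n11 s1 (copr _ D11) (cardf _ Du).
  by apply/imsetP; exists y => //; apply: val_inj; rewrite /= eqy.
have inj : {in D &, injective f}.
  move=> [n1 n2] [m1 m2] Du Dv eqf.
  move: (Du) (Dv); rewrite !inE /= => /andP[Nn1 Nn2] /andP[Nm1 Nm2].
  have key (x n m : gT) : n \in N -> m \in N -> x * n \in f (n1, n2) ->
      x * m \in f (n1, n2) -> n = m.
    move=> Nn Nm h1 h2.
    have : (x * n)^-1 * (x * m) \in N :&: f (n1, n2).
      rewrite inE; apply/andP; split; last by rewrite groupM ?groupV.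
      by rewrite invMg -mulgA mulKg groupM ?groupV.
    rewrite TI // inE invMg -mulgA mulKg => /eqP h.
    by apply/eqP; rewrite eq_mulVg1 h.
  have m1in : x1 * m1 \in f (n1, n2) by rewrite eqf mem_gen // !inE eqxx.
  have m2in : x2 * m2 \in f (n1, n2) by rewrite eqf mem_gen // !inE eqxx orbT.
  have e1 : n1 = m1 by apply: (key x1) => //; rewrite mem_gen // !inE eqxx.
  have e2 : n2 = m2 by apply: (key x2) => //; rewrite mem_gen // !inE eqxx orbT.
  by rewrite e1 e2.
have hsub : [set f u | u in D] \subset [set (f (1%g, 1%g) :^ y)%G | y in N].
  by apply/subsetP => _ /imsetP[u Du ->]; exact: inim.
have := leq_trans (subset_leq_card hsub) (leq_imset_card _ _).
rewrite card_in_imset // cardsX => H.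
have H' : (#|N| * #|N| <= #|N| * 1)%N by rewrite muln1.
move: H'; rewrite leq_pmul2l ?cardG_gt0 // leqNgt.
have := cardG_gt1 N; rewrite ntN => ->; done.
Qed.
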